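(* Let $n\ge r\ge1$ be integers with $n=r$ or $n>r=1$. Then there exists a constant $\kappa'>0$ such that for every $Z\in{\rm St}(n,r)$, \[ {\rm dist}(Z,\mathcal{S}_{+}^{n,r})\le\kappa'\,{\rm dist}(Z,\mathbb{R}_{+}^{n\times r}). \]
   Context: ${\rm St}(n,r):=\{X\in\mathbb{R}^{n\times r}: X^\top X=I_r\}$, $\mathbb{R}_{+}^{n\times r}$ is the cone of entrywise nonnegative $n\times r$ matrices, $\mathcal{S}_{+}^{n,r}:=\mathbb{R}_{+}^{n\times r}\cap{\rm St}(n,r)$, and ${\rm dist}(X,\Omega)=\inf_{Y\in\Omega}\|X-Y\|_F$ (Frobenius norm). *)

(* Defs.v *)
From mathcomp Require Import all_boot all_order all_algebra.
From mathcomp Require Import classical_sets reals.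
Set Implicit Arguments. Unset Strict Implicit. Unset Printing Implicit Defensive.
Import Order.TTheory GRing.Theory Num.Theory.
Local Open Scope ring_scope.
Local Open Scope classical_set_scope.

Definition frob {R : realType} {n r : nat} (X : 'M[R]_(n, r)) : R :=
  Num.sqrt (\sum_(i < n) \sum_(j < r) X i j ^+ 2).

Definition stiefel (R : realType) (n r : nat) : set 'M[R]_(n, r) :=
  [set X | X^T *m X = 1%:M].

Definition nonneg_mx (R : realType) (n r : nat) : set 'M[R]_(n, r) :=
  [set X | forall i j, 0 <= X i j].

Definition nonneg_stiefel (R : realType) (n r : nat) : set 'M[R]_(n, r) :=
  @nonneg_mx R n r `&` @stiefel R n r.

Definition dist {R : realType} {n r : nat} (X : 'M[R]_(n, r))
  (Omega : set 'M[R]_(n, r)) : R :=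
  inf [set frob (X - Y) | Y in Omega].

(* Main.v *)
Require Import Defs.
From mathcomp Require Import all_boot all_order all_algebra.
From mathcomp Require Import classical_sets reals.
From mathcomp Require Import ring lra.
Import Order.TTheory GRing.Theory Num.Theory.
Local Open Scope ring_scope.
Local Open Scope classical_set_scope.
Local Open Scope ring_scope.

Set Implicit Arguments. Unset Strict Implicit.
Section S.
Variable R : realType.

Lemma frob_ge0 n r (X : 'M[R]_(n, r)) : 0 <= frob X.
Proof. exact: sqrtr_ge0. Qed.

Lemma dist_ge0 n r (Z : 'M[R]_(n, r)) (O : set 'M[R]_(n, r)) :
  O !=set0 -> 0 <= dist Z O.
Proof.
move=> [Y OY]; apply: lb_le_inf; first by exists (frob (Z - Y)), Y.
by move=> x [Y' _ <-]; exact: frob_ge0.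
Qed.

Lemma dist_le n r (Z Y : 'M[R]_(n, r)) (O : set 'M[R]_(n, r)) :
  O Y -> dist Z O <= frob (Z - Y).
Proof.
move=> OY; apply: ge_inf; last by exists Y.
exists 0 => x [Y' _ <-]; exact: frob_ge0.
Qed.

Lemma frob_entry n r (X : 'M[R]_(n, r)) i j : `|X i j| <= frob X.
Proof.
rewrite -(sqrtr_sqr (X i j)) /frob ler_sqrt; last first.
  by apply: sumr_ge0 => k _; apply: sumr_ge0 => l _; exact: sqr_ge0.
rewrite (bigD1 i) //= (bigD1 j) //= -addrA lerDl.
apply: addr_ge0; first by apply: sumr_ge0 => k _; exact: sqr_ge0.
by apply: sumr_ge0 => k _; apply: sumr_ge0 => l _; exact: sqr_ge0.
Qed.

Lemma dist_nonneg_entry n r (Z : 'M[R]_(n, r)) i j :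
  - dist Z (@nonneg_mx R n r) <= Z i j.
Proof.
rewrite lerNl; apply: lb_le_inf; first by exists (frob (Z - 0)), 0 => //= ? ?; rewrite mxE.
move=> x [Y Y0 <-] /=; apply: le_trans (frob_entry (Z - Y)%R i j).
rewrite !mxE; have := Y0 i j; rewrite ler_normr => ?; apply/orP; right; lra.
Qed.

Lemma frob_le n r (X : 'M[R]_(n, r)) c : 0 <= c ->
  \sum_(i < n) \sum_(j < r) X i j ^+ 2 <= c ^+ 2 -> frob X <= c.
Proof.
move=> c0 h; by rewrite -(ger0_norm c0) -sqrtr_sqr /frob ler_sqrt // sqr_ge0.
Qed.

Lemma col_unit n r (Z : 'M[R]_(n, r)) j : stiefel Z ->
  \sum_(i < n) Z i j ^+ 2 = 1.
Proof.
move=> /(congr1 (fun M : 'M[R]_r => M j j)); rewrite !mxE eqxx /= => h.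
by rewrite -[RHS]h; apply: eq_bigr => i _; rewrite !mxE expr2.
Qed.

Lemma col_orth n r (Z : 'M[R]_(n, r)) i j : stiefel Z -> i != j ->
  \sum_(l < n) Z l i * Z l j = 0.
Proof.
move=> /(congr1 (fun M : 'M[R]_r => M i j)); rewrite !mxE => h /negbTE ij; rewrite ij /= in h.
by by rewrite -[RHS]h; apply: eq_bigr => l _; rewrite !mxE.
Qed.


Lemma dist_via n r (Z Y : 'M[R]_(n, r)) c : 0 <= c -> nonneg_stiefel Y ->
  \sum_(i < n) \sum_(j < r) (Z - Y) i j ^+ 2 <= c ^+ 2 ->
  dist Z (@nonneg_stiefel R n r) <= c.
Proof.
move=> c0 NY h; apply: le_trans (dist_le Z NY) _; exact: frob_le.
Qed.

Lemma case_r1 n (Z : 'M[R]_(n, 1)) (i0 : 'I_n) : stiefel Z ->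
  dist Z (@nonneg_stiefel R n 1) <= (4 * n%:R) * dist Z (@nonneg_mx R n 1).
Proof.
move=> SZ; set d := dist Z (@nonneg_mx R n 1).
have d0 : 0 <= d by apply: dist_ge0; exists 0 => i j; rewrite mxE.
have zlb l : - d <= Z l ord0 := dist_nonneg_entry Z l ord0.
have U := col_unit ord0 SZ.
have n1 : 1 <= n%:R :> R by rewrite ler1n; case: (n) i0 => [[]|].
have c0 : 0 <= 4 * n%:R * d by rewrite mulr_ge0 // mulr_ge0.
set p := fun l => Num.max (Z l ord0) 0.
set a2 := \sum_l p l ^+ 2.
have hp l : Z l ord0 ^+ 2 - p l ^+ 2 <= d ^+ 2.
  rewrite /p; case: (leP (Z l ord0) 0) => h.
    rewrite expr0n /= subr0; have := zlb l; nra.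
  by rewrite subrr sqr_ge0.
have hp2 l : p l ^+ 2 <= Z l ord0 ^+ 2.
  rewrite /p; case: (leP (Z l ord0) 0) => h.
    by rewrite expr0n /= sqr_ge0.
  by [].
have hzp l : Z l ord0 * p l = p l ^+ 2.
  rewrite /p; case: (leP (Z l ord0) 0) => h.
    by rewrite mulr0 expr0n.
  by rewrite expr2.
have p0 l : 0 <= p l by rewrite /p le_max lexx orbT.
have b2 : 1 - a2 <= n%:R * d ^+ 2.
  rewrite -[X in X - _]U /a2 -sumrB; apply: le_trans (ler_sum _ (fun l _ => hp l)) _.
  by rewrite sumr_const card_ord mulr_natl.
have a2le : a2 <= 1 by rewrite -U; apply: ler_sum => l _; exact: hp2.
have a2ge : 0 <= a2 by apply: sumr_ge0 => l _; exact: sqr_ge0.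
case: (eqVneq a2 0) => a20.
  have sq2 (x y : R) : (x - y) ^+ 2 <= 2 * x ^+ 2 + 2 * y ^+ 2.
    by have := sqr_ge0 (x + y); nra.
  apply: (@dist_via _ _ _ (delta_mx i0 ord0)) => //.
    split.
      by move=> i j; rewrite mxE ler0n.
    rewrite /stiefel /= trmx_delta mul_delta_mx; apply/matrixP => i j.
    by rewrite !mxE !ord1 eqxx.
  apply: (@le_trans _ _ (\sum_i (2 * Z i ord0 ^+ 2 + 2 * (delta_mx i0 ord0 : 'M[R]_(n,1)) i ord0 ^+ 2))).
    by apply: ler_sum => i _; rewrite big_ord1 !mxE; exact: sq2.
  rewrite big_split /= -!mulr_sumr U (bigD1 i0) //= big1; last first.
    by move=> i /negbTE ii0; rewrite mxE ii0 expr0n.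
  rewrite mxE !eqxx addr0 expr1n.
  move: b2; rewrite a20 subr0 => b2; nra.
have a2p : 0 < a2 by rewrite lt_def a20 a2ge.
set a := Num.sqrt a2.
have ap : 0 < a by rewrite sqrtr_gt0.
have aa : a ^+ 2 = a2 by rewrite sqr_sqrtr // ltW.
have a1 : a <= 1 by nra.
pose Y : 'M[R]_(n, 1) := \matrix_(l, j) (p l / a).
apply: (@dist_via _ _ _ Y) => //.
  split.
    by move=> i j; rewrite mxE divr_ge0 // ltW.
  apply/matrixP => i j; rewrite !mxE !ord1 eqxx /=.
  under eq_bigr => l _ do rewrite !mxE.
  rewrite -(@divff _ a2) ?gt_eqF // {1}/a2 -aa mulr_suml; apply: eq_bigr => l _; field.
  by rewrite gt_eqF.
apply: (@le_trans _ _ (2 - 2 * a)).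
  rewrite le_eqVlt; apply/orP; left; apply/eqP; rewrite (@eq_bigr _ _ _ _ _ _ _ (fun l => Z l ord0 ^+ 2 + (p l ^+ 2 / a ^+ 2 - 2 / a * p l ^+ 2))); last first.
    move=> l _; rewrite big_ord1 !mxE -{2}(hzp l); field; by rewrite gt_eqF.
  rewrite big_split /= U sumrB -mulr_suml -mulr_sumr -/a2 -aa; field; by rewrite gt_eqF.
nra.
Qed.

Lemma term_le_sum m (F : 'I_m -> R) k : (forall l, 0 <= F l) -> F k <= \sum_l F l.
Proof.
move=> h; rewrite (bigD1 k) //= lerDl; apply: sumr_ge0 => l _; exact: h.
Qed.

Lemma case_sq m (Z : 'M[R]_(m, m)) (i0 : 'I_m) : stiefel Z ->
  dist Z (@nonneg_stiefel R m m) <= (8 * m%:R ^+ 4) * dist Z (@nonneg_mx R m m).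
Proof.
move=> SZ; set d := dist Z (@nonneg_mx R m m).
have d0 : 0 <= d by apply: dist_ge0; exists 0 => i j; rewrite mxE.
have zlb l j : - d <= Z l j := dist_nonneg_entry Z l j.
set M : R := m%:R.
have M1 : 1 <= M by rewrite /M ler1n; case: (m) i0 => [[]|].
have U j := col_unit j SZ.
have zub l j : Z l j ^+ 2 <= 1.
  by rewrite -(U j); apply: (@term_le_sum m (fun l => Z l j ^+ 2) l) => ?; exact: sqr_ge0.
have zle1 l j : Z l j <= 1 by have := zub l j; nra.
have zge1 l j : -1 <= Z l j by have := zub l j; nra.
have kap0 : 0 <= 8 * M ^+ 4 * d by rewrite mulr_ge0 // mulr_ge0 // exprn_ge0 // (le_trans ler01).
have sq2 (x y : R) : (x - y) ^+ 2 <= 2 * x ^+ 2 + 2 * y ^+ 2.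
  by have := sqr_ge0 (x + y); nra.
have sumZ : \sum_i \sum_j Z i j ^+ 2 = M.
  rewrite exchange_big /=; under eq_bigr => j _ do rewrite U.
  by rewrite sumr_const card_ord.
case: (leP (4 * M ^+ 3)^-1 d) => hd.
  apply: (@dist_via _ _ _ 1%:M) => //.
    split; first by move=> i j; rewrite mxE ler0n.
    by rewrite /stiefel /= trmx1 mulmx1.
  apply: (@le_trans _ _ (\sum_i \sum_j (2 * Z i j ^+ 2 + 2 * (1%:M : 'M[R]_m) i j ^+ 2))).
    by apply: ler_sum => i _; apply: ler_sum => j _; rewrite !mxE; exact: sq2.
  have e1 : \sum_(i < m) \sum_(j < m) (1%:M : 'M[R]_m) i j ^+ 2 = M.
    rewrite (eq_bigr (fun _ => 1)); first by rewrite sumr_const card_ord.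
    move=> i _; rewrite (bigD1 i) //= big1 ?mxE ?eqxx ?addr0 ?expr1n //.
    by move=> j /negbTE ji; rewrite mxE eq_sym ji expr0n.
  under eq_bigr => i _ do rewrite big_split /=.
  rewrite big_split /=.
  under eq_bigr => i _ do rewrite -mulr_sumr.
  rewrite -mulr_sumr.
  under [X in _ + X <= _]eq_bigr => i _ do rewrite -mulr_sumr.
  rewrite -mulr_sumr sumZ e1.
  have M3 : 0 < 4 * M ^+ 3 by rewrite mulr_gt0 // exprn_gt0 // (lt_le_trans ltr01).
  have h1 : 1 <= 4 * M ^+ 3 * d by rewrite -[X in X <= _](divff (lt0r_neq0 M3)) ler_pM2l.
  have -> : (8 * M ^+ 4 * d) ^+ 2 = 4 * M ^+ 2 * (4 * M ^+ 3 * d) ^+ 2 by ring.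
  have h2 : 1 <= (4 * M ^+ 3 * d) ^+ 2 by move: h1; set x := 4 * M ^+ 3 * d; nra.
  have h3 : 4 * M ^+ 2 <= 4 * M ^+ 2 * (4 * M ^+ 3 * d) ^+ 2 by rewrite ler_peMr // mulr_ge0 // sqr_ge0.
  apply: le_trans h3; nra.
have M0 : 0 < M by apply: lt_le_trans M1.
have M3 : 0 < 4 * M ^+ 3 by rewrite mulr_gt0 // exprn_gt0.
have hd' : 4 * M ^+ 3 * d < 1.
  by rewrite -[X in _ < X](divff (lt0r_neq0 M3)) ltr_pM2l.
set t := (2 * M)^-1.
have t0 : 0 < t by rewrite invr_gt0 mulr_gt0.
have tM : 2 * M * t = 1 by rewrite mulfV // mulf_neq0 // lt0r_neq0.
have dt : d <= t.
  have h : 2 * M * d <= 1.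
    apply: le_trans (ltW hd'); rewrite ler_wpM2r //; nra.
  have -> : d = (2 * M * d) * t by rewrite mulrAC tM mul1r.
  by rewrite ger_pMl // ?ler_pdivrMl.
have hex j : exists k, t <= Z k j.
  apply/existsP; apply: contraT => /existsPn h.
  have : 1 <= M * t ^+ 2.
    have -> : M * t ^+ 2 = \sum_(k < m) t ^+ 2 by rewrite sumr_const card_ord mulr_natl.
    rewrite -(U j); apply: ler_sum => k _.
    have := h k; rewrite -ltNge => hk; have := zlb k j; nra.
  nra.
pose s j := xchoose (hex j).
have hs j : t <= Z (s j) j := xchooseP (hex j).
have pr (a b : R) : -d <= a -> a <= 1 -> -d <= b -> b <= 1 -> -d <= a * b.
  move=> a1 a2 b1 b2; case: (leP 0 a) => ha; case: (leP 0 b) => hb; nra.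
have ov k i j : i != j -> Z k i * Z k j <= M * d.
  move=> ne; have h := col_orth SZ ne.
  have := @term_le_sum m (fun l => Z l i * Z l j + d) k.
  rewrite big_split /= h sumr_const card_ord add0r -mulr_natl -/M => H.
  have : Z k i * Z k j + d <= M * d by apply: H => l; have := pr _ _ (zlb l i) (zle1 l i) (zlb l j) (zle1 l j); lra.
  lra.
have inj : injective s.
  move=> i j e; apply/eqP; apply: contraT => ne.
  have := ov (s i) i j ne; rewrite {2}e => h.
  have h1 := hs i; have h2 := hs j.
  have : t * t <= Z (s i) i * Z (s j) j by apply: ler_pM => //; apply: ltW.
  have : M * d * (4 * M ^+ 2) < t * t * (4 * M ^+ 2).
    have -> : t * t * (4 * M ^+ 2) = 1.
      by transitivity ((2 * M * t) ^+ 2); [ring | rewrite tM expr1n].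
    by have -> : M * d * (4 * M ^+ 2) = 4 * M ^+ 3 * d by ring.
  have M2 : 0 < 4 * M ^+ 2 by rewrite mulr_gt0 // exprn_gt0.
  rewrite ltr_pM2r // => h3 h4; lra.
have [g sK gK] := injF_bij inj.
have other l j : l != s j -> Z l j ^+ 2 <= 4 * M ^+ 4 * d ^+ 2.
  move=> ne; have li : s (g l) = l := gK l.
  have ij : g l != j by apply: contra ne => /eqP <-; rewrite li.
  have h := ov l (g l) j ij; have h1 := hs (g l); rewrite li in h1.
  have zu : Z l j <= 2 * M ^+ 2 * d.
    case: (leP 0 (Z l j)) => hz; last by apply: le_trans (ltW hz) _; rewrite mulr_ge0 // mulr_ge0 // exprn_ge0 // ltW.
    have h2 : t * Z l j <= M * d by apply: le_trans h; rewrite ler_wpM2r.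
    have -> : Z l j = 2 * M * (t * Z l j) by rewrite mulrA tM mul1r.
    have -> : 2 * M ^+ 2 * d = 2 * M * (M * d) by rewrite expr2; ring.
    by rewrite ler_wpM2l // mulr_ge0 // ltW.
  have zl := zlb l j.
  have dd : d <= 2 * M ^+ 2 * d by rewrite ler_peMl // ; nra.
  have -> : 4 * M ^+ 4 * d ^+ 2 = (2 * M ^+ 2 * d) ^+ 2 by ring.
  nra.
pose P : 'M[R]_m := \matrix_(l, j) ((l == s j)%:R).
apply: (@dist_via _ _ _ P) => //.
  split; first by move=> i j; rewrite mxE ler0n.
  apply/matrixP => i j; rewrite !mxE.
  rewrite (bigD1 (s i)) //= big1 ?addr0; last first.
    by move=> l /negbTE h; rewrite !mxE h mul0r.
  by rewrite !mxE eqxx mul1r (inj_eq inj) eq_sym.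
set c := 4 * M ^+ 4 * d ^+ 2.
have c0 : 0 <= c by rewrite /c mulr_ge0 ?sqr_ge0 // mulr_ge0 // exprn_ge0 // ltW.
have col j : \sum_i (Z - P) i j ^+ 2 <= 2 * (M * c).
  have Uj := U j; rewrite (bigD1 (s j)) //= in Uj.
  rewrite (bigD1 (s j)) //= !mxE eqxx.
  rewrite (eq_bigr (fun l => Z l j ^+ 2)); last first.
    by move=> l /negbTE h; rewrite !mxE h subr0.
  have Sc : \sum_(l < m | l != s j) Z l j ^+ 2 <= M * c.
    apply: (@le_trans _ _ (\sum_(l < m | l != s j) c)).
      by apply: ler_sum => l; exact: other.
    have -> : M * c = \sum_(l < m) c by rewrite sumr_const card_ord mulr_natl.
    by rewrite [X in _ <= X](bigD1 (s j)) //= lerDr.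
  have h1 := hs j; have h2 := zle1 (s j) j.
  move: Uj Sc; set S := \sum_(l < m | l != s j) Z l j ^+ 2 => Uj Sc.
  set z := Z (s j) j in h1 h2 Uj *.
  have zz : z ^+ 2 <= z by rewrite expr2 ler_piMl // (le_trans (ltW t0)).
  have -> : (z - 1) ^+ 2 = z ^+ 2 - 2 * z + 1 by ring.
  lra.
rewrite exchange_big /=.
apply: (@le_trans _ _ (\sum_(j < m) (2 * (M * c)))); first by apply: ler_sum => j _; exact: col.
rewrite sumr_const card_ord -(mulr_natl (2 * (M * c)) m) -/M /c.
have M8 : M ^+ 6 <= M ^+ 8 by apply: ler_weXn2l.
have -> : M * (2 * (M * (4 * M ^+ 4 * d ^+ 2))) = 8 * M ^+ 6 * d ^+ 2.
  by ring.
have -> : (8 * M ^+ 4 * d) ^+ 2 = 8 * M ^+ 6 * d ^+ 2 + 56 * M ^+ 8 * d ^+ 2 + 8 * (M ^+ 8 - M ^+ 6) * d ^+ 2.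
  by ring.
rewrite -addrA lerDl addr_ge0 // mulr_ge0 ?sqr_ge0 // mulr_ge0 // ?subr_ge0 //.
by rewrite exprn_ge0 // ltW.
Qed.
End S.

Theorem corollary3p5 (R : realType) (n r : nat) :
  (1 <= r)%N -> (r <= n)%N -> (n = r \/ (r < n)%N /\ r = 1%N) ->
  exists kappa : R, 0 < kappa /\
    forall Z : 'M[R]_(n, r), @stiefel R n r Z ->
      dist Z (@nonneg_stiefel R n r) <= kappa * dist Z (@nonneg_mx R n r).
Proof.
move=> r1 rn [e | [lt e1]].
  subst n; exists (8 * r%:R ^+ 4); split.
    by rewrite mulr_gt0 // exprn_gt0 // ltr0n.
  by move=> Z SZ; exact: (case_sq (Ordinal r1) SZ).
subst r; exists (4 * n%:R); split.
  by rewrite mulr_gt0 // ltr0n (leq_trans _ lt).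
have n0 : (0 < n)%N by apply: leq_trans lt.
by move=> Z SZ; exact: (case_r1 (Ordinal n0) SZ).
Qed.
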